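(* Let $n=p_1p_2\cdots p_r$, where $p_1,\ldots,p_r$ are distinct primes, and let $a,b$ be two distinct proper divisors of $n$ (i.e. divisors not in $\{1,n\}$) such that $a/b=p_k/p_l$ for some $k,l\in\{1,\ldots,r\}$. If $a<b$, then $\deg(a)>\deg(b)$ in $\mathcal{P}(C_n)$.
   Context: For a finite group $G$, the power graph $\mathcal{P}(G)$ is the simple undirected graph with vertex set $G$ in which two distinct vertices are adjacent if one is an integral power of the other. $C_n$ denotes the cyclic group of order $n$, identified with $\mathbb{Z}_n=\{0,1,\ldots,n-1\}$, so a divisor $d<n$ of $n$ is regarded as the element $d\in\mathbb{Z}_n$. $\deg(a)$ is the degree of vertex $a$ in $\mathcal{P}(C_n)$. *)

(* Defs.v *)
From mathcomp Require Import all_boot.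
Set Implicit Arguments. Unset Strict Implicit. Unset Printing Implicit Defensive.

(* The cyclic group C_n is identified with Z_n = {0,...,n-1} (additive).
   An integral power of x is, additively, a multiple m*x mod n with m in Z;
   since n*x = 0, the multiples k*x mod n with 0 <= k < n are all of them. *)
Definition is_power (n x y : nat) : bool :=
  [exists k : 'I_n, y == (k * x) %% n].

Definition pg_adj (n x y : nat) : bool :=
  (x != y) && (is_power n x y || is_power n y x).

Definition pg_deg (n a : nat) : nat :=
  #|[set y : 'I_n | pg_adj n a y]|.

(* Main.v *)
Require Import Defs.
From mathcomp Require Import all_boot.
From mathcomp Require Import zify.

Lemma dvdn_modX d m n : d %| n -> (d %| m %% n) = (d %| m).
Proof. by move=> dn; rewrite /dvdn modn_dvdm. Qed.

Lemma pow1 n x y : 0 < n -> x %| n -> y < n -> is_power n x y = (x %| y).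
Proof.
move=> npos xn yn; apply/existsP/idP.
  by case=> k /eqP ->; rewrite dvdn_modX // dvdn_mull.
move=> xy; have hk : y %/ x < n by apply: leq_ltn_trans (leq_div y x) yn.
by exists (Ordinal hk) => /=; rewrite divnK // modn_small.
Qed.

Lemma pow2 n x y : 0 < n -> x < n -> is_power n y x = (gcdn y n %| x).
Proof.
move=> npos xn; apply/existsP/idP.
  by case=> k /eqP ->; rewrite dvdn_modX ?dvdn_gcdr // dvdn_mull ?dvdn_gcdl.
move=> /dvdnP [t xt].
case: (posnP y) => [y0|ypos].
  subst y; rewrite gcd0n in xt.
  have t0 : t = 0 by move: xn; rewrite xt; case: t {xt} => // t; rewrite mulSn -ltn_subRL subnn.
  by exists (Ordinal npos); rewrite /= xt t0 mul0n mod0n.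
case: (egcdnP n ypos) => km kn def _.
exists (Ordinal (ltn_pmod (km*t) npos)) => /=.
rewrite modnMml (mulnC km) -mulnA def mulnDr mulnA modnMDl modn_small -?xt //.
Qed.

Definition Nb (n x : nat) := [set y : 'I_n | (x %| y) || (gcdn y n %| x)].

Lemma deg_N n x (xn : x < n) : x %| n -> pg_deg n x = #|Nb n x| - 1.
Proof.
move=> xdn; have npos : 0 < n by apply: leq_ltn_trans xn.
rewrite (cardsD1 (Ordinal xn)) inE /= dvdnn /= add1n subn1 /=.
rewrite /pg_deg; apply: eq_card => y; rewrite !inE /pg_adj.
rewrite pow1 // pow2 //.
by case: (y =P Ordinal xn) => [->|ne]; [rewrite eqxx | rewrite eq_sym; case: eqP => // h; case: ne; apply: val_inj].
Qed.

Lemma coprime_prod p t : prime p -> all prime t -> p \notin t -> coprime p (\prod_(x <- t) x).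
Proof.
move=> pp; elim: t => [|x t IH]; first by rewrite big_nil coprimen1.
rewrite big_cons /= inE negb_or => /andP [px pt] /andP [pnx pnt].
by rewrite coprimeMr IH // andbT prime_coprime // dvdn_prime2 // eq_sym.
Qed.

Lemma charN n p q R c y : prime p -> prime q -> p != q -> coprime p R -> coprime q R ->
  c %| R -> n = p*(q*R) ->
  ((c*p %| y) || (gcdn y n %| c*p)) =
  ((y %% p == 0) && (c %| y %% R)) || ((y %% q != 0) && (gcdn (y %% R) R %| c)).
Proof.
move=> pp pq npq cpR cqR cR nE.
have cp : coprime c p by apply: coprime_dvdl cR _; rewrite coprime_sym.
have Rn : R %| n by rewrite nE !dvdn_mull.
have -> : (c*p %| y) = ((y %% p == 0) && (c %| y %% R)).
  by rewrite Gauss_dvd // andbC dvdn_modX.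
congr (_ || _).
apply/idP/idP.
  move=> h; apply/andP; split.
    apply/negP => qy0; have qy : q %| y := qy0.
    have qn : q %| n by rewrite nE dvdn_mull // dvdn_mulr.
    have : q %| c*p by apply: dvdn_trans h; rewrite dvdn_gcd qy qn.
    rewrite Euclid_dvdM // => /orP [qc|qp].
      by move: cqR; rewrite prime_coprime // (dvdn_trans qc cR).
    by move: qp; rewrite dvdn_prime2 // eq_sym (negbTE npq).
  rewrite gcdn_modl.
  have g1 : gcdn y R %| gcdn y n by rewrite dvdn_gcd dvdn_gcdl (dvdn_trans (dvdn_gcdr _ _)).
  have cgp : coprime (gcdn y R) p by apply: coprime_dvdl (dvdn_gcdr _ _) _; rewrite coprime_sym.
  by rewrite -(Gauss_dvdl _ cgp) (dvdn_trans g1).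
case/andP => nqy; rewrite gcdn_modl => g.
have cyq : coprime (gcdn y n) q.
  apply: coprime_dvdl (dvdn_gcdl _ _) _; rewrite coprime_sym prime_coprime //.
have h1 : gcdn y n %| p * R.
  by rewrite -(Gauss_dvdr _ cyq) mulnCA -nE dvdn_gcdr.
have h2 : gcdn y n %| p * gcdn y R.
  by rewrite muln_gcdr dvdn_gcd h1 dvdn_mull // dvdn_gcdl.
by apply: dvdn_trans h2 _; rewrite mulnC dvdn_mul.
Qed.

Lemma core n p q R c : prime p -> prime q -> p < q -> coprime p q -> coprime p R ->
  coprime q R -> c %| R -> n = p*(q*R) -> #|Nb n (c*q)| < #|Nb n (c*p)|.
Proof.
move=> pp pq ltpq cpq cpR cqR cR nE.
have Rpos : 0 < R.
  move: cpR; case: (posnP R) => [->|//]; rewrite /coprime gcdn0 => /eqP p1.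
  by move: (prime_gt1 pp); rewrite p1.
have p0 := prime_gt0 pp; have q1 := prime_gt1 pq.
have npos : 0 < n by rewrite nE !muln_gt0 p0 Rpos ltnW.
have cpqR : coprime p (q*R) by rewrite coprimeMr cpq cpR.
have npq : p != q by rewrite neq_ltn ltpq.
have pn : p %| n by rewrite nE dvdn_mulr.
have qn : q %| n by rewrite nE dvdn_mull // dvdn_mulr.
have Rn : R %| n by rewrite nE !dvdn_mull.
have nE' : n = q * (p * R) by rewrite nE mulnCA.
have mema : forall y : 'I_n, (y \in Nb n (c*p)) =
  ((y %% p == 0) && (c %| y %% R)) || ((y %% q != 0) && (gcdn (y %% R) R %| c)).
  by move=> y; rewrite inE (charN n p q R c y pp pq npq cpR cqR cR nE).
have memb : forall y : 'I_n, (y \in Nb n (c*q)) =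
  ((y %% q == 0) && (c %| y %% R)) || ((y %% p != 0) && (gcdn (y %% R) R %| c)).
  by move=> y; rewrite inE (charN n q p R c y pq pp _ cqR cpR cR nE') // eq_sym.
pose hp (y : nat) := if y %% q == 0 then 0 else y %% p.
pose hq (y : nat) := if y %% q == 0 then y %% p else y %% q.
pose g (y : nat) := chinese p (q*R) (hp y) (chinese q R (hq y) (y %% R)).
have hpl : forall y, hp y < p by move=> y; rewrite /hp; case: ifP => _; [|rewrite ltn_pmod].
have hql : forall y, hq y < q.
  move=> y; rewrite /hq; case: ifP => _; last by rewrite ltn_pmod // ltnW.
  by apply: ltn_trans ltpq; rewrite ltn_pmod.
have qqR : q %| q * R by apply: dvdn_mulr.
have RqR : R %| q * R by apply: dvdn_mull.
have fp : forall y, g y %% n %% p = hp y.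
  by move=> y; rewrite (modn_dvdm _ pn) (chinese_modl cpqR) modn_small.
have fq : forall y, g y %% n %% q = hq y.
  move=> y; rewrite (modn_dvdm _ qn) -(modn_dvdm _ qqR) (chinese_modr cpqR).
  by rewrite (modn_dvdm _ qqR) (chinese_modl cqR) modn_small.
have fR : forall y, g y %% n %% R = y %% R.
  move=> y; rewrite (modn_dvdm _ Rn) -(modn_dvdm _ RqR) (chinese_modr cpqR).
  by rewrite (modn_dvdm _ RqR) (chinese_modr cqR) modn_mod.
pose F (y : 'I_n) : 'I_n := Ordinal (ltn_pmod (g y) npos).
have valF : forall y, val (F y) = g y %% n by [].
pose z0 := chinese p (q*R) 0 (chinese q R q.-1 1).
pose z : 'I_n := Ordinal (ltn_pmod z0 npos).
have zp : z %% p = 0 by rewrite /= (modn_dvdm _ pn) (chinese_modl cpqR) mod0n.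
have zq : z %% q = q.-1.
  rewrite /= (modn_dvdm _ qn) -(modn_dvdm _ qqR) (chinese_modr cpqR).
  by rewrite (modn_dvdm _ qqR) (chinese_modl cqR) modn_small // prednK // ltnW.
have zR : z %% R = 1 %% R.
  rewrite /= (modn_dvdm _ Rn) -(modn_dvdm _ RqR) (chinese_modr cpqR).
  by rewrite (modn_dvdm _ RqR) (chinese_modr cqR).
have za : z \in Nb n (c*p).
  rewrite mema zR gcdn_modl gcd1n dvd1n zq andbT orbC -lt0n.
  by apply/orP; left; rewrite -ltnS prednK // ltnW.
have sub : F @: Nb n (c*q) \subset Nb n (c*p) :\ z.
  apply/subsetP => _ /imsetP [y yb ->].
  rewrite memb in yb.
  rewrite in_setD1 mema valF fp fq fR /hp /hq.
  case: eqP yb => [yq0|yqn] /= yb.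
    apply/andP; split; last by [].
    apply/negP => /eqP e; have := congr1 (fun t : 'I_n => val t %% q) e.
    rewrite zq valF fq /hq yq0 eqxx => e'.
    have h := ltn_pmod y p0; rewrite e' in h; clear -h ltpq; lia.
  case/andP: yb => yp yB.
  apply/andP; split; last by apply/orP; right; rewrite yB andbT; apply/eqP.
  apply/negP => /eqP e; have := congr1 (fun t : 'I_n => val t %% p) e.
  rewrite zp valF fp /hp.
  by case: eqP => // _ e'; move: yp; rewrite e'.
have inj : {in Nb n (c*q) &, injective F}.
  move=> y y' yb y'b /(congr1 val) /= e.
  have e1 := congr1 (fun t => t %% p) e; have e2 := congr1 (fun t => t %% q) e.
  have e3 := congr1 (fun t => t %% R) e.
  rewrite /= !fp in e1; rewrite /= !fq in e2; rewrite /= !fR in e3.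
  rewrite memb in yb; rewrite memb in y'b.
  have [ep eq] : y %% p = y' %% p /\ y %% q = y' %% q.
    move: e1 e2 yb y'b; rewrite /hp /hq.
    case: eqP => [h1|h1]; case: eqP => [h2|h2] //= e1 e2.
    - by rewrite h1 h2.
    - by move=> _ /andP [+ _]; rewrite -e1.
    - by move=> /andP [+ _]; rewrite e1.
  have : y == y' %[mod p*(q*R)].
    by rewrite (chinese_remainder cpqR) (chinese_remainder cqR) ep eq e3 !eqxx.
  by rewrite -nE !modn_small // => /eqP h; apply: val_inj.
have := subset_leq_card sub.
rewrite card_in_imset // (cardsD1 z (Nb n (c*p))) za.
by rewrite add1n ltnS.
Qed.

Theorem lemma2p4 (s : seq nat) (n a b k l : nat) :
  all prime s -> uniq s -> n = \prod_(p <- s) p ->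
  a %| n -> b %| n -> a != 1 -> a != n -> b != 1 -> b != n -> a != b ->
  k < size s -> l < size s ->
  a * nth 0 s l = b * nth 0 s k ->
  a < b -> pg_deg n b < pg_deg n a.
Proof.
move=> hall hu nE an bn _ na _ nb _ ks ls e ab.
set p := nth 0 s k in e; set q := nth 0 s l in e.
have ps : p \in s by apply: mem_nth.
have qs : q \in s by apply: mem_nth.
have pp : prime p by apply: (allP hall).
have pq : prime q by apply: (allP hall).
have p0 := prime_gt0 pp; have q0 := prime_gt0 pq.
have ltpq : p < q.
  rewrite ltnNge; apply/negP => qp.
  have : a * q < b * p.
    by apply: leq_ltn_trans (leq_mul (leqnn a) qp) _; rewrite ltn_pmul2r.
  by rewrite e ltnn.
have npq : p != q by rewrite neq_ltn ltpq.
have cpq : coprime p q by rewrite prime_coprime // dvdn_prime2.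
have qb : q %| b.
  have cqp : coprime q p by rewrite coprime_sym.
  by rewrite -(Gauss_dvdl b cqp) -e dvdn_mull.
have [c bE] := dvdnP qb.
have aE : a = c * p.
  by apply/eqP; rewrite -(@eqn_pmul2r q a (c*p) q0) e bE mulnAC.
set R := \prod_(t <- rem q (rem p s)) t.
have qs' : q \in rem p s by rewrite (mem_rem_uniq _ hu) inE eq_sym npq.
have nE' : n = p * (q * R).
  by rewrite nE (big_rem _ ps) /= (big_rem _ qs').
have allR : all prime (rem q (rem p s)).
  by apply/allP => x /mem_rem /mem_rem; apply: (allP hall).
have cpR : coprime p R.
  apply: coprime_prod => //; apply/negP => /mem_rem.
  by rewrite mem_rem_uniqF.
have cqR : coprime q R.
  by apply: coprime_prod => //; rewrite mem_rem_uniqF // rem_uniq.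
have cR : c %| R.
  have h1 : c %| p * R.
    by rewrite -(dvdn_pmul2r q0) -bE mulnAC -mulnA -nE'.
  have h2 : c %| q * R.
    by rewrite -(dvdn_pmul2r p0) -aE mulnC -nE'.
  have : c %| gcdn (p*R) (q*R) by rewrite dvdn_gcd h1 h2.
  by rewrite -muln_gcdl (eqnP cpq) mul1n.
have Rpos : 0 < R.
  rewrite lt0n; apply/negP => /eqP R0; move: cpR; rewrite R0 /coprime gcdn0 => /eqP p1.
  by move: (prime_gt1 pp); rewrite p1.
have npos : 0 < n by rewrite nE' !muln_gt0 p0 q0 Rpos.
have an' : a < n by rewrite ltn_neqAle na dvdn_leq.
have bn' : b < n by rewrite ltn_neqAle nb dvdn_leq.
rewrite (@deg_N n a an') // (@deg_N n b bn') //.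
have hc := @core n p q R c pp pq ltpq cpq cpR cqR cR nE'.
rewrite -aE -bE in hc.
have h0 : 0 < #|Nb n b| by apply/card_gt0P; exists (Ordinal bn'); rewrite inE /= dvdnn.
clear -hc h0; lia.
Qed.
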